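(* Let $\gamma>0$, $k,L>0$, $(g,o)$ a rooted graph and $\varepsilon>0$. For $N$ large enough, $$\mathbb{P}_{N,\gamma}\Big(\Big|\frac{\#\{i\in[N]:B^L_{(G_N,i)}(k)\simeq(g,o)\}}{N}-\mu^L_\gamma(k,(g,o))\Big|>\varepsilon\Big)<2\exp\Big\{-\frac{\varepsilon^2N}{8kL+2}\Big\},$$ where $\mu^L_\gamma(k,(g,o))=\mathbb{P}_\gamma\big(B^L_{(G,0)}(k)\simeq(g,o)\big)$.
   Context: Graphs are locally finite with vertex set in $\mathbb{Z}$; $d_g$ is graph distance; the length of an edge $\{i,j\}$ is $|i-j|$. $\mathbb{P}_{N,\gamma}$ is the law of the random graph $G_N$ on $[N]=\{1,\dots,N\}$ containing all edges $\{x,x+1\}$ and each other pair $\{x,y\}$ independently with probability $\exp\{-|x-y|^\gamma\}$; $\mathbb{P}_\gamma$ is the analogous law of a random graph $G$ on vertex set $\mathbb{Z}$. A rooted graph is $(g,o)$ with $o$ a vertex of $g$; $(g,o)\simeq(g',o')$ if the translation $x\mapsto x-o+o'$ maps $g$ exactly onto $g'$. $B_{(g,o)}(k)$ is the subgraph of $g$ induced on $\{x:d_g(o,x)\le k\}$, rooted at $o$; the truncated ball $B^L_{(g,o)}(k)$ is $B_{(g',o)}(k)$ where $g'$ is $g$ with all edges of length larger than $L$ removed. *)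

(* Defs.v *)
From HB Require Import structures.
From mathcomp Require Import all_boot all_order all_algebra.
From mathcomp Require Import all_classical all_reals all_analysis.
Set Implicit Arguments. Unset Strict Implicit. Unset Printing Implicit Defensive.
Import Order.TTheory GRing.Theory Num.Theory.
Local Open Scope classical_set_scope.
Local Open Scope ring_scope.

Record zgraph := ZGraph { gV : set int ; gE : int -> int -> Prop }.

Definition is_graph (g : zgraph) : Prop :=
  (forall x y, gE g x y -> [/\ gV g x, gV g y, x <> y & gE g y x]) /\
  (forall x, finite_set [set y | gE g x y]).

(** [dist_le g o n x] <-> d_g(o,x) <= n  (o must be a vertex of g). *)
Fixpoint dist_le (g : zgraph) (o : int) (n : nat) (x : int) : Prop :=
  match n with
  | 0 => x = o /\ gV g o
  | n'.+1 => dist_le g o n' x \/ exists y, dist_le g o n' y /\ gE g y x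
  end.

Definition ball (g : zgraph) (o : int) (k : nat) : zgraph :=
  ZGraph (dist_le g o k) (fun x y => [/\ gE g x y, dist_le g o k x & dist_le g o k y]).

Definition truncate (L : nat) (g : zgraph) : zgraph :=
  ZGraph (gV g) (fun x y => gE g x y /\ (`|x - y| <= L%:Z)%R).

Definition tball (L : nat) (g : zgraph) (o : int) (k : nat) : zgraph :=
  ball (truncate L g) o k.

Definition rooted_iso (g : zgraph) (o : int) (g' : zgraph) (o' : int) : Prop :=
  (forall x, gV g x <-> gV g' (x - o + o')) /\
  (forall x y, gE g x y <-> gE g' (x - o + o') (y - o + o')).

Definition pconn {R : realType} (gamma : R) (m : nat) : R :=
  expR (- ((m%:R : R) `^ gamma)).

(* Vertex a : 'I_N stands for the integer a+1.  The random pairs are the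
   (a,b) with a + 1 < b; an outcome is a set E of such pairs (those present). *)
Definition cand (N : nat) : {set 'I_N * 'I_N} :=
  [set e : 'I_N * 'I_N | ((e.1 : nat).+1 < e.2)%N].

Definition GN (N : nat) (E : {set 'I_N * 'I_N}) : zgraph :=
  ZGraph [set x : int | (1 <= x <= N%:Z)%R]
    (fun x y => [/\ (1 <= x <= N%:Z)%R, (1 <= y <= N%:Z)%R &
       (`|x - y| = 1%:Z \/
        exists e, e \in E /\
          ((x = (e.1 : nat).+1%:Z /\ y = (e.2 : nat).+1%:Z) \/
           (y = (e.1 : nat).+1%:Z /\ x = (e.2 : nat).+1%:Z)))]).

Definition weightN {R : realType} (gamma : R) (N : nat) (E : {set 'I_N * 'I_N}) : R :=
  (\prod_(e in E) pconn gamma (e.2 - e.1)) *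
  (\prod_(e in cand N :\: E) (1 - pconn gamma (e.2 - e.1))).

Definition PN {R : realType} (gamma : R) (N : nat) (A : zgraph -> Prop) : R :=
  \sum_(E : {set 'I_N * 'I_N} | (E \subset cand N) && `[< A (GN E) >]) weightN gamma E.

Definition count_balls (N L k : nat) (G : zgraph) (g : zgraph) (o : int) : nat :=
  #|[set i : 'I_N | `[< rooted_iso (tball L G (i : nat).+1%:Z k) (i : nat).+1%:Z g o >]]|.

(* A probability space (Omega, P) with, for each pair x < y of integers, an
   indicator xi x y of the presence of the edge {x,y}.  The law P_gamma is
   characterised by: the events are measurable and, for every finite family
   of distinct pairs x < y with y - x >= 2, the probability that all of them
   are present is the product of the exp{-|x-y|^gamma}
   (i.e. independent Bernoulli(exp{-|x-y|^gamma}) edges). *)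
Definition is_Pgamma {R : realType} (gamma : R) {d : measure_display}
    {Omega : measurableType d} (P : probability Omega R)
    (xi : int -> int -> Omega -> bool) : Prop :=
  (forall x y, measurable [set w | xi x y w]) /\
  (forall s : seq (int * int), uniq s -> all (fun e => (e.1 + 1 < e.2)%R) s ->
     P (\bigcap_(e in [set` s]) [set w | xi e.1 e.2 w]) =
     (\prod_(e <- s) pconn gamma `|e.2 - e.1|%N)%:E).

Definition Gz {d : measure_display} {Omega : measurableType d}
    (xi : int -> int -> Omega -> bool) (w : Omega) : zgraph :=
  ZGraph setT (fun x y => `|x - y| = 1%:Z \/
                          ((x + 1 < y)%R /\ xi x y w) \/ ((y + 1 < x)%R /\ xi y x w)).

(* Main.v *)
Require Import Defs.
From HB Require Import structures.
From mathcomp Require Import all_boot all_order all_algebra.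
From mathcomp Require Import all_classical all_reals all_analysis.
From mathcomp Require Import ring lra zify.
Set Implicit Arguments. Unset Strict Implicit. Unset Printing Implicit Defensive.
Import Order.TTheory GRing.Theory Num.Theory.

Module P1.
Import fintype finset.
Local Open Scope ring_scope.

Ltac setcase x := repeat match goal with |- context [x \in ?A] => case: (x \in A) end.
Ltac bfin := repeat (simpl; match goal with
 | |- (is_true true -> _) -> _ => move=> /(_ isT)
 | |- (is_true false -> _) -> _ => move=> _
 | |- is_true false -> _ => let h := fresh in move=> h; discriminate h
 | |- is_true true -> _ => move=> _
 end); by [].

Section Ex.
Variable (R : realFieldType) (T : finType) (p : T -> R).
Definition wt (S E : {set T}) := \prod_(e in E) p e * \prod_(e in S :\: E) (1 - p e).
Definition Ex (S : {set T}) (f : {set T} -> R) :=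
  \sum_(E : {set T} | E \subset S) wt S E * f E.

Lemma bigU_set (F G : {set T}) (h : T -> R) : [disjoint F & G] ->
  \prod_(e in F :|: G) h e = \prod_(e in F) h e * \prod_(e in G) h e.
Proof.
move=> d; rewrite -bigU //; apply: eq_bigl => x; by rewrite !inE.
Qed.

Lemma wt_split (S A F G : {set T}) : A \subset S -> F \subset A -> G \subset S :\: A ->
  wt S (F :|: G) = wt A F * wt (S :\: A) G.
Proof.
move=> hAS hF hG; rewrite /wt.
have dFG : [disjoint F & G].
  rewrite -setI_eq0; apply/eqP/setP => x; move: (fintype.subsetP hAS x) (fintype.subsetP hF x) (fintype.subsetP hG x).
  rewrite !inE; setcase x; bfin.
have dS : [disjoint A :\: F & (S :\: A) :\: G].
  rewrite -setI_eq0; apply/eqP/setP => x; rewrite !inE; setcase x; bfin.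
have eS : S :\: (F :|: G) = (A :\: F) :|: ((S :\: A) :\: G).
  apply/setP => x; move: (fintype.subsetP hAS x) (fintype.subsetP hF x) (fintype.subsetP hG x).
  rewrite !inE; setcase x; bfin.
rewrite bigU_set // eS bigU_set //.
by rewrite mulrACA.
Qed.

Lemma Ex_split (S A : {set T}) f : A \subset S ->
  Ex S f = Ex A (fun F => Ex (S :\: A) (fun G => f (F :|: G))).
Proof.
move=> hAS; rewrite /Ex.
rewrite (partition_big (fun E => E :&: A) (fun F => F \subset A)) /=; last first.
  by move=> E _; rewrite subsetIr.
apply: eq_bigr => F hF; rewrite big_distrr /=.
rewrite (reindex_onto (fun G => F :|: G) (fun E => E :\: A)) /=; last first.
  move=> E /andP[hE /eqP hEA]; apply/setP => x; rewrite -hEA.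
  move: (fintype.subsetP hE x); rewrite !inE; setcase x; bfin.
apply: eq_big => G.
  apply/idP/idP.
    case/andP => [/andP [h1 /eqP h2] /eqP h3]; rewrite -h3.
    apply/fintype.subsetP => x; move: (fintype.subsetP h1 x); rewrite !inE; setcase x; bfin.
  move=> hG; apply/andP; split; first (apply/andP; split).
  - apply/fintype.subsetP => x; move: (fintype.subsetP hAS x) (fintype.subsetP hF x) (fintype.subsetP hG x).
    rewrite !inE; setcase x; bfin.
  - apply/eqP/setP => x; move: (fintype.subsetP hAS x) (fintype.subsetP hF x) (fintype.subsetP hG x).
    rewrite !inE; setcase x; bfin.
  - apply/eqP/setP => x; move: (fintype.subsetP hAS x) (fintype.subsetP hF x) (fintype.subsetP hG x).
    rewrite !inE; setcase x; bfin.
move=> hG; rewrite (@wt_split S A) //; first by rewrite mulrA.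
case/andP: hG => [/andP [h1 /eqP h2] /eqP h3]; rewrite -h3.
apply/fintype.subsetP => x; move: (fintype.subsetP h1 x); rewrite !inE; setcase x; bfin.
Qed.

Lemma eq_Ex (S : {set T}) (f g : {set T} -> R) : (forall E : {set T}, E \subset S -> f E = g E) -> Ex S f = Ex S g.
Proof. by move=> h; apply: eq_bigr => E hE; rewrite h. Qed.

Lemma Ex_set0 f : Ex finset.set0 f = f finset.set0.
Proof.
rewrite /Ex (big_pred1 finset.set0); last by move=> E; rewrite finset.subset0.
by rewrite /wt !big_set0 finset.setD0 big_set0 !mul1r.
Qed.

Lemma Ex_set1 e f : Ex [set e] f = p e * f [set e] + (1 - p e) * f finset.set0.
Proof.
rewrite /Ex (bigD1 [set e]) ?subxx //=; congr (_ + _).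
  by rewrite /wt finset.setDv big_set0 big_set1 mulr1.
rewrite (big_pred1 finset.set0); last first.
  move=> E /=; rewrite subset1; case: (E =P [set e]) => [->|_] /=; last by rewrite andbT.
  apply/esym/eqP => /setP /(_ e); by rewrite !inE eqxx.
by rewrite /wt big_set0 finset.setD0 big_set1 mul1r.
Qed.

Lemma Ex_add (S : {set T}) f g : Ex S (fun E => f E + g E) = Ex S f + Ex S g.
Proof. by rewrite /Ex -big_split; apply: eq_bigr => E _; rewrite mulrDr. Qed.

Lemma Ex_scale (S : {set T}) c f : Ex S (fun E => c * f E) = c * Ex S f.
Proof. by rewrite /Ex big_distrr; apply: eq_bigr => E _; rewrite mulrCA. Qed.

Lemma Ex_const (S : {set T}) c : Ex S (fun _ => c) = c * Ex S (fun _ => 1).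
Proof. by rewrite -Ex_scale; apply: eq_bigr => E _; rewrite mulr1. Qed.

Lemma Ex1 (S : {set T}) : Ex S (fun _ => 1) = 1.
Proof.
move: {2}#|S| (leqnn #|S|) => n; elim: n S => [|n IH] S hS.
  move: hS; rewrite leqn0 cards_eq0 => /eqP ->; by rewrite Ex_set0 /=.
case: (set_0Vmem S) => [->|[e he]]; first by rewrite Ex_set0.
have hc : (#|S :\: [set e]| <= n)%N.
  by rewrite -ltnS; apply: leq_trans hS; rewrite (cardsD1 e S) he /= add1n ltnS.
have hsub : [set e] \subset S by rewrite finset.sub1set.
rewrite (Ex_split _ hsub).
have -> : Ex (S :\: [set e]) (fun _ => 1) = 1 by apply: IH.
by rewrite Ex_set1 !mulr1 addrC subrK.
Qed.

Lemma Ex_rec (U : {set T}) e f : e \notin U ->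
  Ex (e |: U) f = p e * Ex U (fun G => f (e |: G)) + (1 - p e) * Ex U f.
Proof.
move=> he; have hsub : [set e] \subset e |: U by rewrite finset.sub1set setU11.
rewrite (Ex_split _ hsub) Ex_set1.
have -> : (e |: U) :\: [set e] = U.
  apply/setP => x; rewrite !inE; case: (x =P e) => [->|] //=; by rewrite (negbTE he).
by rewrite (@eq_Ex U (fun G => f (finset.set0 :|: G)) f) // => E _; rewrite finset.set0U.
Qed.

Definition dep (S A : {set T}) (f : {set T} -> R) :=
  forall E : {set T}, E \subset S -> f E = f (E :&: A).

Lemma Ex_dep (S A : {set T}) f : A \subset S -> dep S A f -> Ex S f = Ex A f.
Proof.
move=> hAS hd; rewrite (Ex_split _ hAS); apply: eq_Ex => F hF.
rewrite (eq_Ex (g := fun _ => f F)); first by rewrite Ex_const Ex1 mulr1.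
move=> G hG; rewrite hd; last first.
  rewrite finset.subUset (fintype.subset_trans hF hAS) /=; apply: fintype.subset_trans hG _; exact: subsetDl.
congr f; apply/setP => x; move: (fintype.subsetP hF x) (fintype.subsetP hG x); rewrite !inE; setcase x; bfin.
Qed.

Lemma Ex_indep (S A B : {set T}) f g : A \subset S -> [disjoint A & B] ->
  dep S A f -> dep S B g -> Ex S (fun E => f E * g E) = Ex S f * Ex S g.
Proof.
move=> hAS dAB hf hg.
have eg : Ex S g = Ex (S :\: A) g.
  rewrite (Ex_split _ hAS) (eq_Ex (g := fun _ => Ex (S :\: A) g)); first by rewrite Ex_const Ex1 mulr1.
  move=> F hF; apply: eq_Ex => G hG.
  rewrite hg; last by rewrite finset.subUset (fintype.subset_trans hF hAS) /=; apply: fintype.subset_trans hG _; exact: subsetDl.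
  rewrite (hg G); last by apply: fintype.subset_trans hG _; exact: subsetDl.
  congr g; apply/setP => x; move: (fintype.subsetP hF x) (fintype.subsetP hG x) (@disjointFr _ _ _ x dAB).
  rewrite !inE; setcase x; bfin.
rewrite (Ex_dep hAS hf) eg (Ex_split _ hAS) mulrC -Ex_scale; apply: eq_Ex => F hF.
rewrite mulrC -Ex_scale; apply: eq_Ex => G hG.
have hFG : F :|: G \subset S.
  by rewrite finset.subUset (fintype.subset_trans hF hAS) /=; apply: fintype.subset_trans hG _; exact: subsetDl.
rewrite hf // hg //.
rewrite (hg G); last by apply: fintype.subset_trans hG _; exact: subsetDl.
congr (f _ * g _); apply/setP => x; move: (fintype.subsetP hF x) (fintype.subsetP hG x) (@disjointFr _ _ _ x dAB);
  rewrite !inE; setcase x; bfin.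
Qed.

Lemma wt_ge0 (hp : forall e, 0 <= p e <= 1) S E : 0 <= wt S E.
Proof.
rewrite /wt mulr_ge0 //; apply: prodr_ge0 => e _; case/andP: (hp e) => // _ h.
by rewrite subr_ge0.
Qed.

Lemma Ex_le (hp : forall e, 0 <= p e <= 1) (S : {set T}) (f g : {set T} -> R) :
  (forall E : {set T}, E \subset S -> f E <= g E) -> Ex S f <= Ex S g.
Proof.
move=> h; apply: ler_sum => E hE; apply: ler_wpM2l; [exact: wt_ge0 | exact: h].
Qed.

Lemma Ex_prod (I : eqType) (s : seq I) (W : I -> {set T}) (f : I -> {set T} -> R) (S : {set T}) :
  uniq s -> (forall i, i \in s -> W i \subset S) -> (forall i, i \in s -> dep S (W i) (f i)) ->
  (forall i j, i \in s -> j \in s -> i != j -> [disjoint W i & W j]) ->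
  Ex S (fun E => \prod_(i <- s) f i E) = \prod_(i <- s) Ex S (f i).
Proof.
elim: s => [|i s IH] /=.
  by move=> *; rewrite big_nil (eq_Ex (g := fun _ => 1)) ?Ex1 // => E _; rewrite big_nil.
case/andP => nis us hW hd hdis.
set B := [set x | has (fun j => x \in W j) s].
rewrite big_cons -IH //; last first.
- by move=> a b ha hb; apply: hdis; rewrite ?in_cons ?ha ?hb ?orbT.
- by move=> j hj; apply: hd; rewrite in_cons hj orbT.
- by move=> j hj; apply: hW; rewrite in_cons hj orbT.
rewrite (eq_Ex (g := fun E => f i E * \prod_(j <- s) f j E)); last by move=> E _; rewrite big_cons.
apply: (Ex_indep (B := B)).
- by apply: hW; exact: mem_head.
- rewrite -setI_eq0; apply/eqP/setP => x; rewrite !inE.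
  apply/negbTE/negP => /andP [hx /hasP [j hj hxj]].
  have hij : i != j by apply/eqP => eij; move: nis; rewrite eij hj.
  have hjs : j \in i :: s by rewrite in_cons hj orbT.
  have := hdis i j (mem_head _ _) hjs hij.
  by move/disjointFr => /(_ x hx); rewrite hxj.
- by apply: hd; exact: mem_head.
- move=> E hE; rewrite big_seq_cond [RHS]big_seq_cond; apply: eq_bigr => j /andP[hj _].
  have hdj : dep S (W j) (f j) by apply: hd; rewrite in_cons hj orbT.
  rewrite (hdj E hE) (hdj (E :&: B)); last by apply: fintype.subset_trans hE; exact: subsetIl.
  congr (f j); apply/setP => x; rewrite !inE.
  case hxj: (x \in W j); rewrite ?andbF ?andbT //.
  by rewrite (_ : has _ _ = true) ?andbT //; apply/hasP; exists j.
Qed.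
End Ex.

End P1.
Import P1.

Module P2.
Local Open Scope ring_scope.

Lemma exp_quad (R : realType) (x : R) : `|x| <= 1/2 -> expR x <= 1 + x + 2 * x ^+ 2.
Proof.
move=> hx.
have h1 : 1 - x <= expR (- x) := expR_ge1Dx (- x).
have h2 : expR x * expR (- x) = 1 by rewrite -expRD subrr expR0.
have := hx; rewrite ler_norml => /andP[ha hb].
have hE := expR_gt0 x.
have h3 : expR x * (1 - x) <= 1.
  by rewrite -[X in _ <= X]h2; apply: ler_wpM2l; [exact: ltW | exact: h1].
nra.
Qed.

Section Mgf.
Variable (R : realType) (T : finType) (p : T -> R).
Hypothesis hp : forall e, 0 <= p e <= 1.

Lemma Ex_bool01 (S : {set T}) (Y : {set T} -> bool) :
  0 <= Ex p S (fun E => (Y E)%:R) <= 1.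
Proof.
apply/andP; split.
  apply: sumr_ge0 => E _; apply: mulr_ge0; [exact: wt_ge0 | by case: (Y E)].
rewrite -[X in _ <= X](Ex1 p S); apply: (Ex_le hp) => E _; by case: (Y E).
Qed.

Lemma Ex_mgf (S : {set T}) (Y : {set T} -> bool) (l : R) : `|l| <= 1/2 ->
  Ex p S (fun E => expR (l * ((Y E)%:R - Ex p S (fun E => (Y E)%:R)))) <= expR (l ^+ 2 / 2).
Proof.
move=> hl.
set q := Ex p S (fun E => (Y E)%:R).
have /andP [q0 q1] : 0 <= q <= 1 by exact: Ex_bool01.
set a := 1 - l * q + 2 * l ^+ 2 * q ^+ 2.
set b := l + 2 * l ^+ 2 * (1 - 2 * q).
have := hl; rewrite ler_norml => /andP[hla hlb].
have key : forall y : R, (y = 0 \/ y = 1) -> expR (l * (y - q)) <= a + b * y.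
  move=> y hy; apply: le_trans (exp_quad _) _.
    rewrite ler_norml; case: hy => ->; apply/andP; split; nra.
  rewrite /a /b; case: hy => ->; nra.
apply: (@le_trans _ _ (Ex p S (fun E => a + b * (Y E)%:R))).
  apply: (Ex_le hp) => E _; apply: key; case: (Y E); [right|left]; by [].
rewrite Ex_add Ex_const Ex1 Ex_scale -/q mulr1.
have h5 : 1 + l ^+ 2 / 2 <= expR (l ^+ 2 / 2) by exact: expR_ge1Dx.
have h4 : 0 <= (l * (2 * q - 1)) ^+ 2 := sqr_ge0 _.
rewrite /a /b; nra.
Qed.
End Mgf.

End P2.
Import P2.

Module P3.
Local Open Scope ring_scope.

Lemma dist_bound (G : zgraph) (L : nat) (o : int) (n : nat) (x : int) :
  dist_le (truncate L G) o n x -> `|x - o| <= (n * L)%:Z.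
Proof.
elim: n x => [|n IH] x /=.
  by case=> -> _; rewrite subrr.
case=> [/IH h|[y [/IH hy [_ hyx]]]]; lia.
Qed.

Lemma local_dist (G1 G2 : zgraph) (L k : nat) (c1 c2 : int) :
  (gV G1 c1 <-> gV G2 c2) ->
  (forall x y, `|x - c1| <= (k * L)%:Z -> `|y - c1| <= (k * L)%:Z -> `|x - y| <= L%:Z ->
     (gE G1 x y <-> gE G2 (x - c1 + c2) (y - c1 + c2))) ->
  forall n, (n <= k)%N -> forall x,
    dist_le (truncate L G1) c1 n x <-> dist_le (truncate L G2) c2 n (x - c1 + c2).
Proof.
move=> hV hE; elim=> [|n IH] hn x /=.
  split.
    by case=> -> h; split; [rewrite subrr add0r | apply/hV].
  by case=> hx h; split; [lia | apply/hV].
have hn' : (n <= k)%N by lia.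
split.
  case=> [h|[y [hy [hyx hl]]]].
    by left; apply/IH.
  right; exists (y - c1 + c2); split; first by apply/IH.
  have b1 := dist_bound hy.
  split; last by have -> : y - c1 + c2 - (x - c1 + c2) = y - x by ring.
  apply/hE => //.
  - apply: le_trans b1 _; rewrite lez_nat leq_mul2r; lia.
  - have : `|x - c1| <= (n.+1 * L)%:Z by lia.
    move=> h; apply: le_trans h _; rewrite lez_nat leq_mul2r; lia.
case=> [h|[y' [hy [hyx hl]]]].
  by left; apply/IH.
right; exists (y' - c2 + c1).
have ey : y' = (y' - c2 + c1) - c1 + c2 by ring.
rewrite ey in hy hyx hl.
split; first by apply/IH.
have b1 := dist_bound hy.
have hl' : `|y' - c2 + c1 - x| <= L%:Z.
  by move: hl; have -> : y' - c2 + c1 - c1 + c2 - (x - c1 + c2) = y' - c2 + c1 - x by ring.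
split => //.
apply/hE => //.
- have : `|y' - c2 + c1 - c1 + c2 - c2| <= (n * L)%:Z by [].
  have -> : y' - c2 + c1 - c1 + c2 - c2 = y' - c2 + c1 - c1 by ring.
  move=> h; apply: le_trans h _; rewrite lez_nat leq_mul2r; lia.
- have : `|y' - c2 + c1 - c1| <= (n * L)%:Z.
    by move: b1; have -> : y' - c2 + c1 - c1 + c2 - c2 = y' - c2 + c1 - c1 by ring.
  move=> h.
  have : `|x - c1| <= (n.+1 * L)%:Z by lia.
  move=> h2; apply: le_trans h2 _; rewrite lez_nat leq_mul2r; lia.
Qed.

Lemma local_iso (G1 G2 : zgraph) (L k : nat) (c1 c2 : int) :
  (gV G1 c1 <-> gV G2 c2) ->
  (forall x y, `|x - c1| <= (k * L)%:Z -> `|y - c1| <= (k * L)%:Z -> `|x - y| <= L%:Z ->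
     (gE G1 x y <-> gE G2 (x - c1 + c2) (y - c1 + c2))) ->
  rooted_iso (tball L G1 c1 k) c1 (tball L G2 c2 k) c2.
Proof.
move=> hV hE; have hd := local_dist hV hE (leqnn k).
split => [x|x y] /=; first exact: hd.
have exy : x - c1 + c2 - (y - c1 + c2) = x - y by ring.
split.
  case=> [[e hl] dx dy]; split => //; [split|exact/hd|exact/hd].
    by apply/hE => //; [exact: dist_bound dx | exact: dist_bound dy].
  by rewrite exy.
case=> [[e hl] dx dy]; rewrite exy in hl.
have dx1 : dist_le (truncate L G1) c1 k x by apply/hd.
have dy1 : dist_le (truncate L G1) c1 k y by apply/hd.
split => //; split => //.
by apply/hE => //; [exact: dist_bound dx1 | exact: dist_bound dy1].
Qed.

Lemma iso_trans (A B C : zgraph) (a b c : int) :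
  rooted_iso A a B b -> rooted_iso B b C c -> rooted_iso A a C c.
Proof.
case=> h1 h2 [h3 h4]; split => [x|x y].
  by rewrite h1 h3; have -> : x - a + b - b + c = x - a + c by ring.
rewrite h2 h4.
have e : forall z, z - a + b - b + c = z - a + c by move=> z; ring.
by rewrite !e.
Qed.

Lemma iso_sym (A B : zgraph) (a b : int) : rooted_iso A a B b -> rooted_iso B b A a.
Proof.
case=> h1 h2; split => [x|x y].
  by rewrite h1; have -> : x - b + a - a + b = x by ring.
have e : forall z, z - b + a - a + b = z by move=> z; ring.
by rewrite h2 !e.
Qed.

End P3.
Import P3.

Module P4.
Local Open Scope classical_set_scope.
Local Open Scope ring_scope.

Section Meas.
Variables (R : realType) (d : measure_display) (Omega : measurableType d)
  (P : probability Omega R) (T : finType) (ev : T -> Omega -> bool) (p : T -> R) (W : {set T}).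
Hypothesis hm : forall e, measurable [set w | ev e w].
Hypothesis hP : forall s : seq T, uniq s -> all (mem W) s ->
  P [set w | all (ev ^~ w) s] = (\prod_(e <- s) p e)%:E.

Definition cyl (s t : seq T) := [set w | all (ev ^~ w) s && all (fun e => ~~ ev e w) t].

Lemma cyl_consl e s t : cyl (e :: s) t = [set w | ev e w] `&` cyl s t.
Proof. by apply/seteqP; split => w /=; rewrite /cyl /= -andbA; [case/andP | case=> -> ->]. Qed.

Lemma cyl_consr e s t : cyl s (e :: t) = ~` [set w | ev e w] `&` cyl s t.
Proof.
apply/seteqP; split => w /=; rewrite /cyl /=.
  by case: (ev e w); rewrite ?andbF //= andbT.
by case: (ev e w) => [[]|] //= [_ ->].
Qed.

Lemma cyl_meas s t : measurable (cyl s t).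
Proof.
elim: s => [|e s IH]; last by rewrite cyl_consl; exact: measurableI.
elim: t => [|e t IH].
  by have -> : cyl [::] [::] = setT by apply/seteqP; split.
by rewrite cyl_consr; apply: measurableI => //; exact: measurableC.
Qed.

Lemma fin_P (A : set Omega) : measurable A -> P A = (fine (P A))%:E.
Proof. by move=> mA; rewrite fineK // fin_num_measure. Qed.

Lemma IE t s : uniq (s ++ t) -> all (mem W) (s ++ t) ->
  P (cyl s t) = (\prod_(e <- s) p e * \prod_(e <- t) (1 - p e))%:E.
Proof.
elim: t s => [|e t IH] s hu hW.
  rewrite big_nil mulr1 -hP; last by move: hW; rewrite cats0.
    by apply: congr1; apply/seteqP; split => w /=; rewrite /cyl /= andbT.
  by move: hu; rewrite cats0.
have hpe : perm_eq (s ++ e :: t) (e :: s ++ t).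
  by rewrite -cat1s perm_catCA perm_refl.
have hu' : uniq (e :: s ++ t) by rewrite -(perm_uniq hpe).
have hW' : all (mem W) (e :: s ++ t) by rewrite -(perm_all _ hpe).
have e1 : cyl s t `\` [set w | ev e w] = cyl s (e :: t).
  by rewrite cyl_consr setIC setDE.
have e2 : cyl s t `&` [set w | ev e w] = cyl (e :: s) t by rewrite cyl_consl setIC.
have i1 : P (cyl s t) = (\prod_(e <- s) p e * \prod_(e <- t) (1 - p e))%:E.
  apply: IH; [by move: hu'; rewrite /= => /andP [] | by move: hW'; rewrite /= => /andP []].
have i2 : P (cyl (e :: s) t) = (\prod_(e <- e :: s) p e * \prod_(e <- t) (1 - p e))%:E by apply: IH.
have h : P (cyl s t) = (P (cyl s (e :: t)) + P (cyl (e :: s) t))%E.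
  by rewrite -e1 -e2; apply: measureDI; [exact: cyl_meas | exact: hm].
rewrite i1 i2 in h.
have hf := fin_P (cyl_meas s (e :: t)).
rewrite hf -EFinD in h.
have h' := EFin_inj h.
rewrite hf.
congr EFin; rewrite big_cons; rewrite big_cons in h'.
have -> : fine (P (cyl s (e :: t))) = \prod_(e <- s) p e * \prod_(e <- t) (1 - p e)
   - (p e * \prod_(j <- s) p j) * \prod_(e <- t) (1 - p e) by rewrite h' addrK.
ring.
Qed.

Definition conf (u : seq T) (w : Omega) : {set T} := [set x | (x \in u) && ev x w].

Lemma conf_cons e u w : conf (e :: u) w = if ev e w then e |: conf u w else conf u w.
Proof.
rewrite /conf; case he: (ev e w); apply/setP => x; rewrite !inE;
  case: (x =P e) => [->|] /=; rewrite ?he ?eqxx ?orbT ?andbF //=.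
Qed.

Lemma decI e u (Phi : {set T} -> bool) s t :
  ([set w | Phi (conf (e :: u) w)] `&` cyl s t) `&` [set w | ev e w] =
  [set w | Phi (e |: conf u w)] `&` cyl (e :: s) t.
Proof.
rewrite cyl_consl; apply/seteqP; split => w /=; rewrite conf_cons.
  by case=> [[h1 h2] h3]; rewrite h3 in h1.
by case=> h1 [h3 h2]; rewrite h3.
Qed.

Lemma decD e u (Phi : {set T} -> bool) s t :
  ([set w | Phi (conf (e :: u) w)] `&` cyl s t) `\` [set w | ev e w] =
  [set w | Phi (conf u w)] `&` cyl s (e :: t).
Proof.
rewrite cyl_consr; apply/seteqP; split => w /=; rewrite conf_cons.
  case=> [[h1 h2] h3]; have h4 : ev e w = false by apply/negP.
  by rewrite h4 in h1; split => //; split => //; rewrite h4.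
case=> h1 [h3 h2]; have h4 : ev e w = false by apply/negP.
by rewrite h4.
Qed.

Lemma B_meas u : forall (Phi : {set T} -> bool) s t, measurable ([set w | Phi (conf u w)] `&` cyl s t).
Proof.
elim: u => [|e u IH] Phi s t.
  have -> : [set w | Phi (conf [::] w)] = if Phi finset.set0 then setT else set0.
    have c0 : forall w, conf [::] w = finset.set0 by move=> w; apply/setP => x; rewrite !inE.
    by case h0: (Phi finset.set0); apply/seteqP; split => w //=; rewrite c0 h0.
  by case: (Phi finset.set0); [rewrite setTI; exact: cyl_meas | rewrite set0I].
set X := _ `&` _.
have -> : X = (X `&` [set w | ev e w]) `|` (X `\` [set w | ev e w]).
  apply/seteqP; split => w; last by case=> [] [].
  move=> hx; case he: (ev e w); [left | right]; split => //=; by rewrite he.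
by rewrite /X decI decD; apply: measurableU; [exact: (IH (fun F => Phi (e |: F))) | exact: IH].
Qed.

Lemma perm_mid (X : seq T) e t : perm_eq (X ++ e :: t) (e :: X ++ t).
Proof. by rewrite -cat1s perm_catCA perm_refl. Qed.

Lemma Bprob u : forall (Phi : {set T} -> bool) s t,
  uniq (u ++ s ++ t) -> all (mem W) (u ++ s ++ t) ->
  P ([set w | Phi (conf u w)] `&` cyl s t) =
  (\prod_(e <- s) p e * \prod_(e <- t) (1 - p e) * Ex p [set x in u] (fun F => (Phi F)%:R))%:E.
Proof.
elim: u => [|e u IH] Phi s t hu hW.
  have -> : [set x in [::]] = finset.set0 :> {set T} by apply/setP => x; rewrite !inE.
  rewrite Ex_set0.
  have -> : [set w | Phi (conf [::] w)] = if Phi finset.set0 then setT else set0.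
    have c0 : forall w, conf [::] w = finset.set0 by move=> w; apply/setP => x; rewrite !inE.
    by case h0: (Phi finset.set0); apply/seteqP; split => w //=; rewrite c0 h0.
  case: (Phi finset.set0); rewrite ?setTI ?set0I ?mulr1 ?mulr0 ?measure0 //.
  exact: IE.
have q1 : perm_eq ((e :: u) ++ s ++ t) (u ++ (e :: s) ++ t) by rewrite perm_sym /=; exact: perm_mid.
have q2 : perm_eq ((e :: u) ++ s ++ t) (u ++ s ++ (e :: t)).
  by rewrite perm_sym /= (catA u s (e :: t)) (catA u s t); exact: perm_mid.
have hu1 := hu; rewrite (perm_uniq q1) in hu1.
have hu2 := hu; rewrite (perm_uniq q2) in hu2.
have hW1 := hW; rewrite (perm_all _ q1) in hW1.
have hW2 := hW; rewrite (perm_all _ q2) in hW2.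
have h : P ([set w | Phi (conf (e :: u) w)] `&` cyl s t) =
  (P ([set w | Phi (conf u w)] `&` cyl s (e :: t)) +
   P ([set w | Phi (e |: conf u w)] `&` cyl (e :: s) t))%E.
  rewrite -decI -decD; apply: measureDI; [exact: B_meas | exact: hm].
rewrite h (IH (fun F => Phi (e |: F))) // IH // -EFinD; congr EFin.
have -> : [set x in e :: u] = e |: [set x in u] by apply/setP => x; rewrite !inE.
rewrite Ex_rec; last by rewrite inE; move: hu => /= /andP [] /negP; rewrite mem_cat => h1 _;
  apply/negP => h2; apply: h1; rewrite h2.
rewrite !big_cons; ring.
Qed.

Definition confW (w : Omega) : {set T} := [set x | (x \in W) && ev x w].

Lemma Pfinal (Phi : {set T} -> bool) :
  P [set w | Phi (confW w)] = (Ex p W (fun F => (Phi F)%:R))%:E.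
Proof.
have := @Bprob (enum W) Phi [::] [::].
rewrite !cats0 enum_uniq => /(_ isT).
have -> : all (mem W) (enum W) by apply/allP => x; rewrite mem_enum.
move=> /(_ isT); rewrite !big_nil !mul1r.
have -> : [set x in enum W] = W by apply/setP => x; rewrite inE mem_enum.
have ec : forall w, conf (enum W) w = confW w.
  by move=> w; apply/setP => x; rewrite !inE mem_enum.
move=> <-; apply: congr1; apply/seteqP; split => w /=.
  by move=> h; split; rewrite ?ec.
by case=> h _; rewrite -ec.
Qed.
End Meas.

End P4.
Import P4.

Module P5.
Local Open Scope ring_scope.

Lemma numeric (R : realType) (n M D Kr eps c : R) :
  M = 2 * Kr + 1 -> D = 8 * Kr + 2 -> 1 <= Kr -> 0 < eps -> eps < 1 ->
  0 <= c -> c <= n / M + 1 -> 0 <= n -> 8 * M * D * (M + 2) <= eps ^+ 2 * n ->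
  M * 2 * (expR (- (eps / 2) * ((n * eps - 2 * Kr) / M)) * expR ((eps / 2) ^+ 2 / 2 * c))
   < 2 * expR (- (eps ^+ 2 * n / D)).
Proof.
move=> hM hD hK he0 he1 hc0 hc hn hN.
have M0 : 0 < M by lra.
have D0 : 0 < D by lra.
set a := n / M.
have ha : a * M = n by rewrite /a mulfVK // gt_eqF.
set b := eps ^+ 2 * n / D.
have hb : b * D = eps ^+ 2 * n by rewrite /b mulfVK // gt_eqF.
set kk := 2 * Kr / M.
have hkk : kk * M = 2 * Kr by rewrite /kk mulfVK // gt_eqF.
have hkk1 : kk <= 1.
  rewrite /kk ler_pdivrMr //; lra.
have e1 : (n * eps - 2 * Kr) / M = eps * a - kk by rewrite /a /kk; field; rewrite gt_eqF.
rewrite e1 -expRD.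
set X := _ + _.
have hX : X <= - (eps ^+ 2 * a / 2) + eps / 2 + eps ^+ 2 / 8 * (a + 1).
  rewrite /X.
  have h1 : (eps / 2) ^+ 2 / 2 * c <= eps ^+ 2 / 8 * (a + 1).
    have -> : (eps / 2) ^+ 2 / 2 = eps ^+ 2 / 8 by field.
    apply: ler_wpM2l; first by apply: divr_ge0; [exact: sqr_ge0 | lra].
    exact: hc.
  have h2 : - (eps / 2) * (eps * a - kk) <= - (eps ^+ 2 * a / 2) + eps / 2.
    have -> : - (eps / 2) * (eps * a - kk) = - (eps ^+ 2 * a / 2) + eps / 2 * kk by rewrite expr2; field.
    rewrite lerD2l; rewrite ger_pMr; lra.
  lra.
have hMe : M < expR M.
  have := expR_ge1Dx M; lra.
have hbound : M + X <= - b.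
  have key : b + (M + 2) <= 3 * eps ^+ 2 * a / 8.
    have hDM : 3 * D - 8 * M >= 1 by lra.
    have : (b + (M + 2)) * (8 * M * D) <= 3 * eps ^+ 2 * a / 8 * (8 * M * D).
      have -> : (b + (M + 2)) * (8 * M * D) = 8 * M * (b * D) + 8 * M * D * (M + 2) by ring.
      have -> : 3 * eps ^+ 2 * a / 8 * (8 * M * D) = 3 * D * eps ^+ 2 * (a * M) by field.
      rewrite hb ha.
      have he2 : 0 <= eps ^+ 2 * n by apply: mulr_ge0; [exact: sqr_ge0 | lra].
      nra.
    rewrite ler_pM2r //; apply: mulr_gt0 => //; lra.
  have : 0 <= eps ^+ 2 by exact: sqr_ge0.
  nra.
rewrite [M * 2]mulrC -mulrA ltr_pM2l //.
apply: (@lt_le_trans _ _ (expR M * expR X)).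
  by rewrite ltr_pM2r ?expR_gt0.
by rewrite -expRD ler_expR; lra.
Qed.

End P5.
Import P5.

Module P6.
Local Open Scope ring_scope.

Lemma ex_ord (N : nat) (x : int) : 1 <= x <= N%:Z -> exists a : 'I_N, x = (a : nat).+1%:Z.
Proof.
move=> /andP [h1 h2].
have ha : (`|x - 1|%N < N)%N by lia.
exists (Ordinal ha) => /=; lia.
Qed.

Section Model.
Variables (N k L : nat).

Definition Wd (i : 'I_N) : {set 'I_N * 'I_N} :=
  [set e in cand N | [&& (i <= e.1 + k * L)%N, (e.1 <= i + k * L)%N,
                         (i <= e.2 + k * L)%N & (e.2 <= i + k * L)%N]].

Definition Yb (g : zgraph) (o : int) (i : 'I_N) (E : {set 'I_N * 'I_N}) : bool :=
  `[< rooted_iso (tball L (GN E) (i : nat).+1%:Z k) (i : nat).+1%:Z g o >].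

Lemma Wd_sub i : Wd i \subset cand N.
Proof. by apply/fintype.subsetP => e; rewrite inE => /andP []. Qed.

Lemma Yb_local g o i (E : {set 'I_N * 'I_N}) : E \subset cand N -> Yb g o i E = Yb g o i (E :&: Wd i).
Proof.
move=> hE; apply: asbool_equiv_eq.
set c := (i : nat).+1%:Z.
suff h : rooted_iso (tball L (GN E) c k) c (tball L (GN (E :&: Wd i)) c k) c.
  by split => h'; [exact: iso_trans (iso_sym h) h' | exact: iso_trans h h'].
apply: local_iso => [//|x y hx hy hxy]; rewrite !subrK /=.
split; case=> h1 h2 [h3|[e [he hc]]]; split => //; [by left| right | by left | right].
  exists e; split => //; rewrite inE he /= inE (fintype.subsetP hE _ he) /=.
  by case: hc => [[ex ey]|[ey ex]]; apply/and4P; split; lia.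
by exists e; split => //; move: he; rewrite inE => /andP [].
Qed.


Variables (d : measure_display) (Om : measurableType d) (xi : int -> int -> Om -> bool).

Definition evz (i : 'I_N) (e : 'I_N * 'I_N) (w : Om) : bool :=
  xi ((e.1 : nat)%:Z - (i : nat)%:Z) ((e.2 : nat)%:Z - (i : nat)%:Z) w.

Lemma Yb_Gz g o (i : 'I_N) (w : Om) : (k * L <= i)%N -> (i + k * L < N)%N ->
  Yb g o i [set e | (e \in Wd i) && evz i e w] <-> rooted_iso (tball L (Gz xi w) 0 k) 0 g o.
Proof.
move=> hi1 hi2; rewrite /Yb.
set c := (i : nat).+1%:Z.
set F := [set e | (e \in Wd i) && evz i e w].
have hh : rooted_iso (tball L (GN F) c k) c (tball L (Gz xi w) 0 k) 0.
  apply: local_iso => [|x y hx hy hxy] /=.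
    split => // _; rewrite /c; lia.
  rewrite !addr0.
  have rx : 1 <= x <= N%:Z by apply/andP; split; lia.
  have ry : 1 <= y <= N%:Z by apply/andP; split; lia.
  split.
    case=> h1 h2 [h3|[e [he hc]]]; first by left; lia.
    move: he; rewrite /F inE => /andP [hW hev].
    move: hW; rewrite inE => /andP [hcand /and4P [b1 b2 b3 b4]].
    move: hcand; rewrite inE => hcand.
    move: hev; rewrite /evz.
    case: hc => [[ex ey]|[ey ex]] hev; right; [left|right]; split; try lia.
      have -> : x - c = (e.1 : nat)%:Z - (i : nat)%:Z by rewrite /c; lia.
      by have -> : y - c = (e.2 : nat)%:Z - (i : nat)%:Z by rewrite /c; lia.
    have -> : x - c = (e.2 : nat)%:Z - (i : nat)%:Z by rewrite /c; lia.
    by have -> : y - c = (e.1 : nat)%:Z - (i : nat)%:Z by rewrite /c; lia.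
  case=> [h3|[[h3 h4]|[h3 h4]]]; split => //; first by left; lia.
    have [a ea] := ex_ord rx; have [b eb] := ex_ord ry.
    right; exists (a, b); split; last by left.
    rewrite /F inE; apply/andP; split.
      rewrite inE; apply/andP; split; first by rewrite inE /=; rewrite /c in h3; lia.
      by apply/and4P; split => /=; rewrite /c in hx hy; lia.
    rewrite /evz /=.
    have <- : x - c = (a : nat)%:Z - (i : nat)%:Z by rewrite /c; lia.
    by have <- : y - c = (b : nat)%:Z - (i : nat)%:Z by rewrite /c; lia.
  have [a ea] := ex_ord rx; have [b eb] := ex_ord ry.
  right; exists (b, a); split; last by right.
  rewrite /F inE; apply/andP; split.
    rewrite inE; apply/andP; split; first by rewrite inE /=; rewrite /c in h3; lia.
    by apply/and4P; split => /=; rewrite /c in hx hy; lia.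
  rewrite /evz /=.
  have <- : y - c = (b : nat)%:Z - (i : nat)%:Z by rewrite /c; lia.
  by have <- : x - c = (a : nat)%:Z - (i : nat)%:Z by rewrite /c; lia.
split => [/asboolP h|h]; last apply/asboolP.
  exact: iso_trans (iso_sym hh) h.
exact: iso_trans hh h.
Qed.

End Model.

End P6.
Import P6.

Module P7.
Local Open Scope classical_set_scope.
Local Open Scope ring_scope.

Definition pN (R : realType) (gamma : R) (N : nat) (e : 'I_N * 'I_N) : R :=
  pconn gamma (e.2 - e.1)%N.
Arguments pN {R} gamma N e.

Lemma pN01 (R : realType) (gamma : R) N e : 0 <= pN gamma N e <= 1.
Proof.
rewrite /pN /pconn; apply/andP; split; first exact: ltW (expR_gt0 _).
by rewrite expR_le1 oppr_le0 powR_ge0.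
Qed.

Lemma PN_Ex (R : realType) (gamma : R) N (A : zgraph -> Prop) :
  PN gamma N A = Ex (pN gamma N) (cand N) (fun E => (`[< A (GN E) >])%:R).
Proof.
rewrite /PN /Ex big_mkcondr /=; apply: eq_bigr => E _.
by case: (`[< A (GN E) >]); rewrite ?mulr1 ?mulr0.
Qed.

Lemma mu_eq (R : realType) (gamma : R) (k L : nat) (g : zgraph) (o : int)
    (d : measure_display) (Omega : measurableType d)
    (P : probability Omega R) (xi : int -> int -> Omega -> bool) (N : nat) (i : 'I_N) :
  is_Pgamma gamma P xi -> (k * L <= i)%N -> (i + k * L < N)%N ->
  fine (P [set w | rooted_iso (tball L (Gz xi w) 0 k) 0 g o]) =
  Ex (pN gamma N) (cand N) (fun E => (Yb k L g o i E)%:R).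
Proof.
case=> hm hprod hi1 hi2.
set ev := evz xi i.
have hm' : forall e, measurable [set w | ev e w] by move=> e; exact: hm.
have hP : forall s : seq ('I_N * 'I_N), uniq s -> all (mem (Wd k L i)) s ->
    P [set w | all (ev ^~ w) s] = (\prod_(e <- s) pN gamma N e)%:E.
  move=> s hu hW.
  pose tau (e : 'I_N * 'I_N) := ((e.1 : nat)%:Z - (i : nat)%:Z, (e.2 : nat)%:Z - (i : nat)%:Z).
  have htau : injective tau.
    move=> [a b] [a' b'] /= [h1 h2]; congr pair; apply: val_inj => /=; lia.
  have := hprod (map tau s); rewrite (map_inj_uniq htau) hu => /(_ isT).
  have hall : all (fun e => (e.1 + 1 < e.2)%R) (map tau s).
    apply/allP => e' /mapP [e he ->] /=.
    move: (allP hW e he); rewrite /= inE => /andP [] ; rewrite inE => hc _; lia.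
  move=> /(_ hall) h.
  have -> : [set w | all (ev ^~ w) s] =
      \bigcap_(e in [set` map tau s]) [set w | xi e.1 e.2 w].
    apply/seteqP; split => w /= h'.
      by move=> e' /mapP [e he ->]; exact: (allP h' e he).
    apply/allP => e he; exact: (h' (tau e) (map_f tau he)).
  rewrite h big_map; congr EFin; rewrite big_seq [RHS]big_seq; apply: eq_bigr => e he.
  move: (allP hW e he); rewrite /= inE => /andP []; rewrite inE => hc _.
  rewrite /pN; congr (pconn gamma _); lia.
have := Pfinal hm' hP (fun F => Yb k L g o i F).
have -> : [set w | Yb k L g o i (confW ev (Wd k L i) w)] =
          [set w | rooted_iso (tball L (Gz xi w) 0 k) 0 g o].
  by apply/seteqP; split => w /= h; apply/(Yb_Gz xi g o w hi1 hi2).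
move=> ->; rewrite /=.
symmetry; apply: Ex_dep; first exact: Wd_sub.
by move=> E hE; rewrite -Yb_local.
Qed.

End P7.
Import P7.

Module P8.
Local Open Scope ring_scope.

Lemma Ex_sum (R : realFieldType) (T : finType) (p : T -> R) (S : {set T}) (J : finType)
  (f : J -> {set T} -> R) :
  Ex p S (fun E => \sum_(j : J) f j E) = \sum_(j : J) Ex p S (f j).
Proof.
rewrite /Ex; under eq_bigr do rewrite mulr_sumr.
exact: exchange_big.
Qed.

Lemma sum_const_seq (R : realFieldType) (I : Type) (s : seq I) (c : R) :
  \sum_(i <- s) c = (size s)%:R * c.
Proof.
elim: s => [|x s IH]; first by rewrite big_nil mul0r.
by rewrite big_cons IH /= -add1n natrD mulrDl mul1r.
Qed.

Section Classes.
Variables (R : realType) (gamma : R) (N k L : nat) (g : zgraph) (o : int).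
Local Notation K := (k * L)%N.
Local Notation m := (2 * K).+1.
Definition cls (i : 'I_N) : 'I_m := Ordinal (ltn_pmod i (ltn0Sn (2 * K))).
Definition qq (i : 'I_N) : R := Ex (pN gamma N) (cand N) (fun E => (Yb k L g o i E)%:R).
Definition Zc (r : 'I_m) (E : {set 'I_N * 'I_N}) : R :=
  \sum_(i | cls i == r) ((Yb k L g o i E)%:R - qq i).

Lemma class_disj (i j : 'I_N) : cls i = cls j -> i != j -> [disjoint Wd k L i & Wd k L j].
Proof.
move=> /(congr1 val) /= hij nij.
have hm : forall a b : nat, (a %% m = b %% m)%N -> (a < b)%N -> (m <= b - a)%N.
  move=> a b hab lab; apply: dvdn_leq; first by lia.
  by rewrite -eqn_mod_dvd ?hab //; lia.
have hd : (m <= j - i)%N \/ (m <= i - j)%N.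
  case: (ltngtP i j) => h; [left; exact: hm | right; exact: hm |].
  by move: nij; rewrite (val_inj h) eqxx.
rewrite -setI_eq0; apply/eqP/setP => x; rewrite !inE.
apply/negbTE/negP => /andP [/andP [_ /and4P [a1 a2 _ _]] /andP [_ /and4P [b1 b2 _ _]]].
lia.
Qed.

Lemma class_size (r : 'I_m) :
  (size [seq i <- index_enum 'I_N | cls i == r] <= (N %/ m)%N.+1)%N.
Proof.
set s := [seq i <- _ | _].
have us : uniq s by apply: filter_uniq; exact: index_enum_uniq.
have inj : {in s &, injective (fun i : 'I_N => ((i : nat) %/ m)%N)}.
  move=> i j; rewrite !mem_filter => /andP [/eqP hi _] /andP [/eqP hj _] /= hd.
  apply: val_inj; rewrite /= (divn_eq i m) (divn_eq j m) hd.
  by move: hi hj => <- /(congr1 val) /= ->.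
rewrite -(size_map (fun i : 'I_N => ((i : nat) %/ m)%N)) -(size_iota 0 (N %/ m)%N.+1).
apply: uniq_leq_size; first by rewrite map_inj_in_uniq.
move=> x /mapP [i _ ->]; rewrite mem_iota /= add0n ltnS.
by apply: leq_div2r; exact: ltnW.
Qed.

Lemma class_mgf (r : 'I_m) (l : R) : `|l| <= 1/2 ->
  Ex (pN gamma N) (cand N) (fun E => expR (l * Zc r E)) <= expR (l ^+ 2 / 2 * (N %/ m)%N.+1%:R).
Proof.
move=> hl.
set s := [seq i <- index_enum 'I_N | cls i == r].
have e1 : forall E, expR (l * Zc r E) =
    \prod_(i <- s) expR (l * ((Yb k L g o i E)%:R - qq i)).
  by move=> E; rewrite /Zc mulr_sumr expR_sum big_filter.
rewrite (@eq_Ex _ _ (pN gamma N) _ _ (fun E => \prod_(i <- s) expR (l * ((Yb k L g o i E)%:R - qq i))));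
  last by move=> E _; exact: e1.
rewrite (@Ex_prod _ _ (pN gamma N) _ _ (fun i => Wd k L i)); last first.
- move=> i j; rewrite !mem_filter => /andP [/eqP hi _] /andP [/eqP hj _] nij.
  by apply: class_disj => //; rewrite hi hj.
- by move=> i _ E hE; rewrite Yb_local.
- by move=> i _; exact: Wd_sub.
- by apply: filter_uniq; exact: index_enum_uniq.
apply: (@le_trans _ _ (\prod_(i <- s) expR (l ^+ 2 / 2))).
  apply: ler_prod => i _; apply/andP; split.
    apply: sumr_ge0 => E _; apply: mulr_ge0; [exact: (@wt_ge0 _ _ (pN gamma N) (@pN01 _ gamma N)) | exact: ltW (expR_gt0 _)].
  exact: (@Ex_mgf _ _ (pN gamma N) (@pN01 _ gamma N)).
rewrite -expR_sum sum_const_seq ler_expR mulrC ler_wpM2l //.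
  by apply: divr_ge0; [exact: sqr_ge0 | lra].
by rewrite ler_nat; exact: class_size.
Qed.
End Classes.

End P8.
Import P8.

Module P9.
Local Open Scope classical_set_scope.
Local Open Scope ring_scope.

Lemma L1 K n : (\sum_(i < n) (i < K : nat) = minn n K)%N.
Proof.
elim: n => [|n IH]; first by rewrite big_ord0 min0n.
by rewrite big_ord_recr /= IH; case: (ltnP n K) => h /=; lia.
Qed.
Lemma L2 K N n : (\sum_(i < n) (N <= i + K : nat) = n - (N - K))%N.
Proof.
elim: n => [|n IH]; first by rewrite big_ord0; lia.
by rewrite big_ord_recr /= IH; case: (leqP N (n + K)) => h /=; lia.
Qed.
Lemma nonint_bound N K : (\sum_(i < N) (~~ ((K <= i) && (i + K < N)) : nat) <= 2 * K)%N.
Proof.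
apply: (@leq_trans (\sum_(i < N) ((i < K : nat) + (N <= i + K : nat)))).
  apply: leq_sum => i _; case: (leqP K i) => h1; case: (ltnP (i + K) N) => h2 //=.
rewrite big_split /= L1 L2; lia.
Qed.

Lemma card_sum (R : realType) N (b : 'I_N -> bool) :
  (#|[set i : 'I_N | b i]|)%:R = \sum_(i : 'I_N) (b i)%:R :> R.
Proof.
rewrite -sum1_card natr_sum big_mkcond /=; apply: eq_bigr => i _.
case h: (b i).
  by rewrite mem_set.
case: ifP => // /set_mem; by rewrite /= h.
Qed.


End P9.
Import P9.

Local Open Scope classical_set_scope.
Local Open Scope ring_scope.

Theorem lemma9 (R : realType) (gamma : R) (k L : nat) (g : zgraph) (o : int)
    (eps : R) (d : measure_display) (Omega : measurableType d)
    (P : probability Omega R) (xi : int -> int -> Omega -> bool) :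
  0 < gamma -> (0 < k)%N -> (0 < L)%N -> is_graph g -> gV g o -> 0 < eps ->
  is_Pgamma gamma P xi ->
  let mu := fine (P [set w | rooted_iso (tball L (Gz xi w) 0 k) 0 g o]) in
  exists N0 : nat, forall N : nat, (N0 <= N)%N ->
    PN gamma N (fun G => `| (count_balls N L k G g o)%:R / N%:R - mu | > eps)
    < 2 * expR (- (eps ^+ 2 * N%:R / (8 * k%:R * L%:R + 2))).
Proof.
move=> hg hk hL hgr ho heps hPg mu.
have hK : (1 <= k * L)%N by rewrite muln_gt0 hk hL.
pose K := (k * L)%N.
pose m := (2 * K).+1.
pose C0 : nat := (8 * m * (8 * K + 2) * (m + 2))%N.
have hC : 0 <= C0%:R / eps ^+ 2 :> R by apply: divr_ge0 => //; exact: sqr_ge0.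
pose B := Num.Def.archi_bound (C0%:R / eps ^+ 2 : R).
exists (maxn m B) => N hN.
have hNm : (m <= N)%N by move: hN; rewrite geq_max => /andP [].
have hNB : (B <= N)%N by move: hN; rewrite geq_max => /andP [].
have hKN : (K < N)%N by rewrite /m in hNm; lia.
pose i0 : 'I_N := Ordinal hKN.
have hq : forall i : 'I_N, (K <= i)%N -> (i + K < N)%N -> qq gamma k L g o i = mu.
  by move=> i h1 h2; rewrite /mu (mu_eq g o hPg h1 h2).
have hmu : mu = qq gamma k L g o i0 by rewrite hq //= /m in hNm *; lia.
have /andP [mu0 mu1] : 0 <= mu <= 1 by rewrite hmu; exact: (Ex_bool01 (@pN01 _ gamma N)).
have hp := @pN01 _ gamma N.
have N0 : (0 < N)%N by lia.
have N0r : 0 < N%:R :> R by rewrite ltr0n.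
have cnt : forall E : {set 'I_N * 'I_N}, (count_balls N L k (GN E) g o)%:R = \sum_(i : 'I_N) (Yb k L g o i E)%:R :> R.
  by move=> E; exact: card_sum.
have cntN : forall E : {set 'I_N * 'I_N}, ((count_balls N L k (GN E) g o)%:R : R) <= N%:R.
  by move=> E; rewrite ler_nat; apply: leq_trans (max_card _) _; rewrite card_ord.
rewrite PN_Ex.
have [he1|he1] := ltP eps 1; last first.
  rewrite (@eq_Ex _ _ (pN gamma N) _ _ (fun _ => 0)); last first.
    move=> E _; rewrite asboolF //= => h.
    have c0 : 0 <= ((count_balls N L k (GN E) g o)%:R : R) / N%:R by apply: divr_ge0.
    have c1 : ((count_balls N L k (GN E) g o)%:R : R) / N%:R <= 1.
      by rewrite ler_pdivrMr // mul1r.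
    move: h; rewrite ltNge => /negP; apply; rewrite ler_norml; apply/andP; split; lra.
  rewrite Ex_const mul0r; apply: mulr_gt0 => //; exact: expR_gt0.
set lam := eps / 2.
set sv := (N%:R * eps - 2 * K%:R) / m%:R.
have m0 : 0 < m%:R :> R by rewrite ltr0n.
have hlam : `|lam| <= 1 / 2 by rewrite ger0_norm /lam; lra.
have hlam' : `|- lam| <= 1 / 2 by rewrite normrN.
have lam0 : 0 < lam by rewrite /lam; lra.
set Z := Zc gamma (N:=N) (k:=k) (L:=L) g o.
set F := fun E => \sum_(r : 'I_m) (expR (lam * Z r E - lam * sv) + expR (- lam * Z r E - lam * sv)).
have step1 : Ex (pN gamma N) (cand N)
    (fun E => `[< eps < `|(count_balls N L k (GN E) g o)%:R / N%:R - mu| >]%:R) <=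
    Ex (pN gamma N) (cand N) F.
  apply: (Ex_le hp) => E hE.
  have Fge0 : forall r : 'I_m, 0 <= expR (lam * Z r E - lam * sv) + expR (- lam * Z r E - lam * sv).
    by move=> r; apply: addr_ge0; exact: ltW (expR_gt0 _).
  case: asboolP => h /=; last by apply: sumr_ge0 => r _; exact: Fge0.
  have hS : \sum_(i : 'I_N) ((Yb k L g o i E)%:R - mu) =
      \sum_(r : 'I_m) Z r E + \sum_(i : 'I_N) (qq gamma k L g o i - mu).
    rewrite (eq_bigr (fun i => ((Yb k L g o i E)%:R - qq gamma k L g o i) + (qq gamma k L g o i - mu)));
      last by move=> i _; ring.
    rewrite big_split /=; congr (_ + _).
    rewrite (partition_big (@cls N k L) xpredT) //=.
  have hB : `|\sum_(i : 'I_N) (qq gamma k L g o i - mu)| <= 2 * K%:R.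
    apply: le_trans (ler_norm_sum _ _ _) _.
    apply: (@le_trans _ _ (\sum_(i : 'I_N) ((~~ ((K <= i)%N && (i + K < N)%N) : nat)%:R))).
      apply: ler_sum => i _; case: (boolP ((K <= i)%N && (i + K < N)%N)) => hi.
        by case/andP: hi => h1 h2; rewrite hq // subrr normr0.
      have /andP [q0 q1] : 0 <= qq gamma k L g o i <= 1 := Ex_bool01 hp _ _.
      rewrite /= ler_norml; apply/andP; split; lra.
    rewrite -natr_sum -natrM ler_nat; exact: nonint_bound.
  have hX : N%:R * eps < `|\sum_(i : 'I_N) ((Yb k L g o i E)%:R - mu)|.
    have e : \sum_(i : 'I_N) ((Yb k L g o i E)%:R - mu) =
        ((count_balls N L k (GN E) g o)%:R / N%:R - mu) * N%:R.
      rewrite sumrB cnt sumr_const card_ord -mulr_natr; field.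
      by rewrite lt0r_neq0.
    by rewrite e normrM (ger0_norm (ltW N0r)) [X in _ < X]mulrC ltr_pM2l.
  have [r hr] : exists r : 'I_m, sv < `|Z r E|.
    case: (pselect (exists r : 'I_m, sv < `|Z r E|)) => // hn; exfalso.
    have hall : forall r : 'I_m, `|Z r E| <= sv.
      by move=> r; rewrite leNgt; apply/negP => hr; apply: hn; exists r.
    have h1 : `|\sum_(r : 'I_m) Z r E| <= m%:R * sv.
      apply: le_trans (ler_norm_sum _ _ _) _.
      apply: le_trans (ler_sum _ (fun r _ => hall r)) _.
      by rewrite sumr_const card_ord mulr_natl.
    have h2 : m%:R * sv = N%:R * eps - 2 * K%:R by rewrite /sv mulrC divfK // lt0r_neq0.
    have h3 := ler_normD (\sum_(r : 'I_m) Z r E) (\sum_(i : 'I_N) (qq gamma k L g o i - mu)).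
    move: hX; rewrite hS; lra.
  rewrite /F (bigD1 r) //=.
  apply: (@le_trans _ _ (expR (lam * Z r E - lam * sv) + expR (- lam * Z r E - lam * sv))); last first.
    rewrite lerDl; apply: sumr_ge0 => r' _; exact: Fge0.
  have ex1 : forall x : R, 0 <= x -> 1 <= expR x by move=> x hx; have := expR_ge1Dx x; lra.
  case: (lerP 0 (Z r E)) => hz.
    rewrite ger0_norm // in hr.
    have : 1 <= expR (lam * Z r E - lam * sv) by apply: ex1; nra.
    have := expR_gt0 (- lam * Z r E - lam * sv); lra.
  rewrite ltr0_norm // in hr.
  have : 1 <= expR (- lam * Z r E - lam * sv) by apply: ex1; nra.
  have := expR_gt0 (lam * Z r E - lam * sv); lra.
apply: le_lt_trans step1 _.
rewrite /F Ex_sum.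
set c : R := ((N %/ m)%N.+1)%:R.
apply: (@le_lt_trans _ _ (\sum_(r : 'I_m) (2 * (expR (- (lam * sv)) * expR (lam ^+ 2 / 2 * c))))).
  apply: ler_sum => r _; rewrite Ex_add.
  have e1 : forall l, Ex (pN gamma N) (cand N) (fun E => expR (l * Z r E - lam * sv)) =
      expR (- (lam * sv)) * Ex (pN gamma N) (cand N) (fun E => expR (l * Z r E)).
    by move=> l; rewrite -Ex_scale; apply: eq_Ex => E _; rewrite -expRD addrC.
  rewrite e1 e1 mulr_natl mulr2n; apply: lerD; apply: ler_wpM2l; try exact: (ltW (expR_gt0 _)).
    exact: class_mgf.
  by have := class_mgf gamma N g o r hlam'; rewrite sqrrN.
have hM : m%:R = 2 * K%:R + 1 :> R by rewrite /m -addn1 natrD natrM.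
have hD : 8 * k%:R * L%:R + 2 = 8 * K%:R + 2 :> R by rewrite /K natrM mulrA.
have hKr : 1 <= K%:R :> R by rewrite ler1n.
have hc0 : 0 <= c by rewrite /c ler0n.
have hc : c <= N%:R / m%:R + 1.
  by rewrite /c -natr1 lerD2r ler_pdivlMr // -natrM ler_nat leq_trunc_div.
have hNN : 8 * m%:R * (8 * K%:R + 2) * (m%:R + 2) <= eps ^+ 2 * N%:R.
  have hB0 := archi_boundP hC.
  have e2 : (C0%:R : R) = 8 * m%:R * (8 * K%:R + 2) * (m%:R + 2).
    rewrite /C0 /K !natrM !natrD; ring.
  rewrite -e2; apply: ltW.
  have hBN : (B%:R : R) <= N%:R by rewrite ler_nat.
  have he2 : 0 < eps ^+ 2 by exact: exprn_gt0.
  move: hB0; rewrite -/B ltr_pdivrMr // => h.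
  apply: (lt_le_trans h); rewrite mulrC ler_wpM2l //; exact: ltW.
have := numeric hM erefl hKr heps he1 hc0 hc (ler0n _ N) hNN.
rewrite -hD => hnum; apply: le_lt_trans hnum.
have e3 : - (lam * sv) = - (eps / 2) * ((N%:R * eps - 2 * K%:R) / m%:R) by rewrite /lam /sv mulNr.
rewrite e3 sumr_const card_ord -[X in X <= _]mulr_natl mulrA.
by [].
Qed.
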